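(* For each integer $n\geq 2$, the Johnson graph $J(n,2)$ satisfies $\operatorname{tww}(J(n,2))=\operatorname{lb}_1(J(n,2))$, and this value equals $2(n-3)$ if $n\geq 5$ and $0$ otherwise.
   Context: All graphs are finite and simple. The Johnson graph $J(n,2)$ has vertex set the 2-element subsets of $\{1,\dots,n\}$, two vertices $S,S'$ being adjacent iff $|S\cap S'|=1$. A trigraph is a graph whose edges are each colored red or black; a graph is viewed as a trigraph with all edges black; the red degree of a vertex is the number of red edges incident to it. For a partition $\mathcal{P}$ of $V(G)$, the quotient trigraph $G/\mathcal{P}$ has vertex set $\mathcal{P}$; two distinct parts $U,W$ are joined by a black edge if every pair $\{u,w\}$ with $u\in U,w\in W$ is a black edge of $G$, are non-adjacent if no such pair is an edge, and are joined by a red edge otherwise. A contraction sequence of an $N$-vertex trigraph $G$ is a sequence $\mathcal{P}_N,\dots,\mathcal{P}_1$ of partitions of $V(G)$ where $\mathcal{P}_N$ is the partition into singletons and each $\mathcal{P}_i$ arises from $\mathcal{P}_{i+1}$ by merging two parts; its width is the maximum red degree over all $G/\mathcal{P}_i$, and $\operatorname{tww}(G)$ is the minimum width of a contraction sequence. For $|V(G)|\geq 2$, $\operatorname{lb}_1(G)$ is the minimum over all 2-element subsets $\{u,v\}\subseteq V(G)$ of the maximum red degree of $G/\mathcal{P}$ where $\mathcal{P}$ has $\{u,v\}$ as its only non-singleton part; $\operatorname{lb}_1(G)=0$ if $|V(G)|=1$. *)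

(* Defs.v *)
From mathcomp Require Import all_boot.
Set Implicit Arguments. Unset Strict Implicit. Unset Printing Implicit Defensive.

Section TwinWidth.
Variable T : finType.
(* A (simple) graph on T, given by its adjacency relation e; viewed as a
   trigraph all of whose edges are black. *)
Variable e : rel T.

Definition black_parts (U W : {set T}) : bool :=
  [forall u in U, forall w in W, e u w].
Definition nonadj_parts (U W : {set T}) : bool :=
  [forall u in U, forall w in W, ~~ e u w].
Definition red_parts (U W : {set T}) : bool :=
  ~~ black_parts U W && ~~ nonadj_parts U W.

Definition red_degree (P : {set {set T}}) (U : {set T}) : nat :=
  #|[set W in P | (W != U) && red_parts U W]|.

Definition max_red_degree (P : {set {set T}}) : nat :=
  \max_(U in P) red_degree P U.

Definition singleton_partition : {set {set T}} := [set [set x] | x : T].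

Definition contraction_step (P Q : {set {set T}}) : bool :=
  [exists U in P, exists W in P,
     (U != W) && (Q == (U :|: W) |: ((P :\ U) :\ W))].

(* A contraction sequence P_N, ..., P_1 (N = |V(G)|), listed as the sequence
   [:: P_N; P_(N-1); ...; P_1]. *)
Definition contraction_sequence (s : seq {set {set T}}) : bool :=
  if s is P :: s' then
    [&& P == singleton_partition, path contraction_step P s' & size s == #|T|]
  else false.

Definition cs_width (s : seq {set {set T}}) : nat :=
  \max_(P <- s) max_red_degree P.

Definition is_twin_width (k : nat) : Prop :=
  (exists2 s, contraction_sequence s & cs_width s = k) /\
  (forall s, contraction_sequence s -> k <= cs_width s).

Definition pair_partition (u v : T) : {set {set T}} :=
  [set [set u; v]] :|: [set [set x] | x in ~: [set u; v]].

Definition lb1 : nat :=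
  if #|T| <= 1 then 0
  else \big[minn/#|T|]_(p : T * T | p.1 != p.2) max_red_degree (pair_partition p.1 p.2).

End TwinWidth.

Definition johnson2 (n : nat) : finType := {A : {set 'I_n} | #|A| == 2}.

Definition johnson2_rel (n : nat) : rel (johnson2 n) :=
  fun A B => #|val A :&: val B| == 1.

(* Main.v *)
From Stdlib Require Import Btauto.
Require Import Defs.
From mathcomp Require Import all_boot zify.
Set Implicit Arguments. Unset Strict Implicit. Unset Printing Implicit Defensive.

Section Gen.
Variable T : finType.
Variable e : rel T.

Definition cls (L : eqType) (f : T -> L) (x : T) : {set T} :=
  [set y in [set: T] | f x == f y].
Definition part (L : eqType) (f : T -> L) : {set {set T}} :=
  preim_partition f [set: T].

Lemma mem_cls (L : eqType) (f : T -> L) x y : (y \in cls f x) = (f x == f y).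
Proof. by rewrite !inE. Qed.

Lemma cls_mem (L : eqType) (f : T -> L) x : cls f x \in part f.
Proof. by apply: imset_f; rewrite inE. Qed.

Lemma partP (L : eqType) (f : T -> L) U : U \in part f -> exists x, U = cls f x.
Proof. by case/imsetP=> x _ ->; exists x. Qed.

Lemma cls_eq (L : eqType) (f : T -> L) x y : (cls f x == cls f y) = (f x == f y).
Proof.
apply/eqP/eqP => [H|H].
  by have := mem_cls f x x; rewrite eqxx H mem_cls => /eqP.
by apply/setP => z; rewrite !mem_cls H.
Qed.

Lemma part_partition (L : eqType) (f : T -> L) : partition (part f) [set: T].
Proof. exact: preim_partitionP. Qed.

Lemma part_ext (L L' : eqType) (f : T -> L) (g : T -> L') :
  (forall x y, (f x == f y) = (g x == g y)) -> part f = part g.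
Proof.
move=> H; apply/setP => U; apply/idP/idP => /partP [x ->].
  have -> : cls f x = cls g x by apply/setP => z; rewrite !mem_cls H.
  exact: cls_mem.
have -> : cls g x = cls f x by apply/setP => z; rewrite !mem_cls H.
exact: cls_mem.
Qed.

Lemma part_inj (L : eqType) (f : T -> L) : injective f ->
  part f = singleton_partition T.
Proof.
move=> fi; apply/setP => U; apply/idP/idP.
  case/partP => x ->; have -> : cls f x = [set x].
    by apply/setP => z; rewrite mem_cls inE; apply/eqP/eqP => [/fi|->].
  by apply: imset_f.
case/imsetP => x _ ->; have <- : cls f x = [set x].
  by apply/setP => z; rewrite mem_cls inE; apply/eqP/eqP => [/fi|->].
exact: cls_mem.
Qed.

Lemma card_merge (P : {set {set T}}) D U W : partition P D -> U \in P -> W \in P ->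
  U != W -> #|(U :|: W) |: ((P :\ U) :\ W)| = (#|P|).-1.
Proof.
move=> pP UP WP UW.
have tP := partition_trivIset pP.
have U0 : U != set0 := partition_neq0 pP UP.
have nin : (U :|: W) \notin ((P :\ U) :\ W).
  apply/negP; rewrite !inE => /and3P [H1 H2 H3].
  have := (trivIsetP tP) _ _ H3 UP; rewrite H2 => /(_ isT).
  rewrite -setI_eq0 => /eqP H.
  case/set0Pn: U0 => x xU; have : x \in set0 by rewrite -H inE xU inE xU.
  by rewrite inE.
rewrite cardsU1 nin /=.
have HU : #|P| = (#|P :\ U|).+1 by rewrite (cardsD1 U P) UP.
have HW : #|P :\ U| = (#|(P :\ U) :\ W|).+1.
  by rewrite (cardsD1 W (P :\ U)) !inE eq_sym UW WP.
by rewrite HU HW.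
Qed.

Lemma step_card (P Q : {set {set T}}) D : partition P D -> contraction_step P Q ->
  #|Q| = (#|P|).-1.
Proof.
move=> pP /existsP [U /andP [UP /existsP [W /andP [WP /andP [UW /eqP ->]]]]].
exact: card_merge pP UP WP UW.
Qed.

Lemma merge_step (L : eqType) (f : T -> L) (l1 l2 : L) x1 x2 :
  f x1 = l1 -> f x2 = l2 -> l1 != l2 ->
  contraction_step (part f) (part (fun x => if f x == l2 then l1 else f x)).
Proof.
move=> h1 h2 l12.
set g := (fun x => if f x == l2 then l1 else f x).
apply/existsP; exists (cls f x1); rewrite cls_mem /=.
apply/existsP; exists (cls f x2); rewrite cls_mem /= cls_eq h1 h2 l12 /=.
have gin : forall y, (g y == l1) = (f y == l1) || (f y == l2).
  move=> y; rewrite /g; case: (f y =P l2) => [->|_]; first by rewrite !eqxx orbT.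
  by rewrite orbF.
have gout : forall y z, f y != l1 -> f y != l2 -> (g z == f y) = (f z == f y).
  move=> y z n1 n2; rewrite /g; case: (f z =P l2) => [->|//].
  by rewrite eq_sym (negbTE n1) eq_sym (negbTE n2).
apply/eqP/setP => Z; rewrite !inE; apply/idP/idP.
  case/partP => y ->.
  case: (boolP ((f y == l1) || (f y == l2))) => Hy.
    apply/orP; left; apply/eqP/setP => z; rewrite (mem_cls g) in_setU !(mem_cls f) h1 h2.
    have -> : g y = l1 by apply/eqP; rewrite gin.
    by rewrite eq_sym gin (eq_sym l1) (eq_sym l2).
  move: Hy; rewrite negb_or => /andP [n1 n2].
  have -> : cls g y = cls f y.
    apply/setP => z; rewrite (mem_cls g) (mem_cls f).
    have -> : g y = f y by rewrite /g (negbTE n2).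
    by rewrite eq_sym gout // eq_sym.
  by rewrite cls_eq cls_eq h1 h2 n1 n2 cls_mem orbT.
case/orP => [/eqP -> | /and3P [H1 H2 H3]].
  have -> : cls f x1 :|: cls f x2 = cls g x1; last exact: cls_mem.
  apply/setP => z; rewrite (mem_cls g) in_setU !(mem_cls f) h1 h2.
  have -> : g x1 = l1 by rewrite /g h1 (negbTE l12).
  by rewrite (eq_sym l1 (g z)) gin (eq_sym l1) (eq_sym l2).
case/partP: H3 H1 H2 => y -> H1 H2.
rewrite cls_eq h2 in H1; rewrite cls_eq h1 in H2.
have -> : cls f y = cls g y; last exact: cls_mem.
apply/setP => z; rewrite (mem_cls g) (mem_cls f).
have -> : g y = f y by rewrite /g (negbTE H1).
by rewrite (eq_sym (f y) (g z)) gout // eq_sym.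
Qed.

Lemma not_red (U W : {set T}) :
  (forall u u' w, u \in U -> u' \in U -> w \in W -> e u w = e u' w) ->
  (forall u w w', u \in U -> w \in W -> w' \in W -> e u w = e u w') ->
  ~~ red_parts e U W.
Proof.
move=> H1 H2; rewrite /red_parts negb_and !negbK.
case: (boolP (black_parts e U W)) => //= /forallPn [u].
rewrite negb_imply => /andP [uU /forallPn [w]]; rewrite negb_imply => /andP [wW euw].
apply/forallP => u'; apply/implyP => u'U; apply/forallP => w'; apply/implyP => w'W.
by rewrite -(H1 u u' w') // -(H2 u w w').
Qed.

Lemma red_bound (L : eqType) (f : T -> L) x (cand : seq L) :
  (forall y, f y != f x -> red_parts e (cls f x) (cls f y) -> f y \in cand) ->
  red_degree e (part f) (cls f x) <= size cand.
Proof.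
move=> H.
set R := [set W in part f | (W != cls f x) && red_parts e (cls f x) W].
pose h (W : {set T}) := if [pick y in W] is Some y then f y else f x.
have hcls : forall y, h (cls f y) = f y.
  move=> y; rewrite /h; case: pickP => [z|/(_ y)].
    by rewrite mem_cls => /eqP.
  by rewrite mem_cls eqxx.
rewrite /red_degree -/R cardE -(size_map h).
apply: uniq_leq_size.
  rewrite map_inj_in_uniq ?enum_uniq // => W1 W2.
  rewrite !mem_enum !inE => /andP [/partP [y1 ->] _] /andP [/partP [y2 ->] _].
  by rewrite !hcls => E; apply/eqP; rewrite cls_eq E.
move=> l /mapP [W]; rewrite mem_enum inE => /andP [/partP [y ->]].
rewrite cls_eq => /andP [ne rd] ->; rewrite hcls; apply: H => //; by rewrite eq_sym.
Qed.


Lemma card_singleton : #|singleton_partition T| = #|T|.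
Proof. by rewrite card_imset //; exact: set1_inj. Qed.

Lemma build (G : {set {set T}} -> Prop) k :
  (forall P, G P -> partition P [set: T]) ->
  (forall P, G P -> max_red_degree e P <= k) ->
  (forall P, G P -> 1 < #|P| -> exists2 Q, G Q & contraction_step P Q) ->
  G (singleton_partition T) -> 0 < #|T| ->
  exists2 s, contraction_sequence s & cs_width e s <= k.
Proof.
move=> Gp Gb Gn G0 T0.
have aux : forall m (P : {set {set T}}), #|P| = m.+1 -> G P -> exists s,
    [/\ path (@contraction_step T) P s, size s = m &
        all (fun Q => max_red_degree e Q <= k) s].
  elim=> [|m IH] P cP GP; first by exists [::].
  have [Q GQ st] : exists2 Q, G Q & contraction_step P Q by apply: Gn; rewrite ?cP.
  have cQ : #|Q| = m.+1 by rewrite (step_card (Gp _ GP) st) cP.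
  have [s [p sz a]] := IH Q cQ GQ.
  by exists (Q :: s); rewrite /= st p sz Gb.
have cS : #|singleton_partition T| = (#|T|.-1).+1 by rewrite card_singleton prednK.
have [s [p sz a]] := aux _ _ cS G0.
exists (singleton_partition T :: s).
  by rewrite /contraction_sequence eqxx p /= sz prednK.
apply/bigmax_leqP_seq => Q; rewrite inE => /orP [/eqP ->|Qs] _; first exact: Gb.
by move/allP: a => /(_ Q Qs).
Qed.

Lemma pair_of_step Q : contraction_step (singleton_partition T) Q ->
  exists u v, u != v /\ Q = pair_partition u v.
Proof.
move=> /existsP [U /andP [UP /existsP [W /andP [WP /andP [UW /eqP ->]]]]].
case/imsetP: UP => u _ eU; case/imsetP: WP => v _ eW; subst U W.
have uv : u != v by apply: contraNneq UW => ->.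
exists u, v; split => //.
apply/setP => Z; rewrite /pair_partition !inE; apply/orP/orP.
  case=> [->|]; first by left.
  move=> /and3P [H1 H2 /imsetP [x _ eZ]]; subst Z; right.
  apply/imsetP; exists x => //; rewrite !inE negb_or.
  by apply/andP; split; [apply: contra H2 | apply: contra H1] => /eqP ->.
case=> [->|]; first by left.
move=> /imsetP [x]; rewrite !inE negb_or => /andP [xu xv] ->; right.
apply/and3P; split; first by apply: contra xv => /eqP /set1_inj ->.
  by apply: contra xu => /eqP /set1_inj ->.
by apply: imset_f.
Qed.

Lemma bigmin_le_seq (I : eqType) (r : seq I) (P : pred I) (F : I -> nat) x i0 :
  i0 \in r -> P i0 -> \big[minn/x]_(i <- r | P i) F i <= F i0.
Proof.
elim: r => [//|a r IH]; rewrite inE big_cons => /orP [/eqP <-|ir] Pi.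
  by rewrite Pi geq_minl.
case: (P a); last exact: IH.
by rewrite geq_min IH ?orbT.
Qed.

Lemma lb1_le u v : u != v -> lb1 e <= max_red_degree e (pair_partition u v).
Proof.
move=> uv; rewrite /lb1; case: ifP => // _.
by apply: (@bigmin_le_seq _ _ _ _ _ (u, v)); rewrite ?mem_index_enum.
Qed.

Lemma lb1_ge m : 1 < #|T| -> m <= #|T| ->
  (forall u v : T, u != v -> m <= max_red_degree e (pair_partition u v)) -> m <= lb1 e.
Proof.
move=> T1 HT H; rewrite /lb1; case: ifP => [T1'|_]; first by rewrite leqNgt T1 in T1'.
apply: (big_ind (fun r => m <= r)) => //.
  by move=> a b ha hb; rewrite leq_min ha hb.
by case=> a b /= ab; apply: H.
Qed.

Lemma seq_lower s : contraction_sequence s -> lb1 e <= cs_width e s.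
Proof.
case: s => [//|P0 s] /and3P [/eqP eP0 p /eqP sz].
have [T1|T1] := leqP #|T| 1; first by rewrite /lb1 T1.
case: s p sz => [/= _ sz|P1 s]; first by rewrite -sz in T1.
move=> /= /andP [st _] _.
have [u [v [uv eQ]]] : exists u v, u != v /\ P1 = pair_partition u v.
  by apply: pair_of_step; rewrite -eP0.
apply: (leq_trans (lb1_le uv)); rewrite -eQ.
by apply: leq_bigmax_seq; rewrite ?inE ?eqxx ?orbT.
Qed.

Lemma part_eqfun (L : eqType) (f g : T -> L) : f =1 g -> part f = part g.
Proof. by move=> H; apply: part_ext => x y; rewrite !H. Qed.

Lemma relabel_same (L : eqType) (f : T -> L) (l1 l2 : L) : (forall x, f x != l1) ->
  part (fun x => if f x == l2 then l1 else f x) = part f.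
Proof.
move=> H; apply: part_ext => x y.
case: (f x =P l2) => [->|hx]; case: (f y =P l2) => [->|hy].
- by rewrite !eqxx.
- by rewrite eq_sym (negbTE (H y)); apply/esym/eqP => E; apply: hy; rewrite -E.
- by rewrite (negbTE (H x)); apply/esym/eqP => E; apply: hx; rewrite E.
- by [].
Qed.

Lemma part_gt1 (L : eqType) (f : T -> L) : 1 < #|part f| -> exists x y, f x != f y.
Proof.
case/card_gt1P => U [W [/partP [x ->] /partP [y ->]]]; rewrite cls_eq => ne.
by exists x, y.
Qed.

End Gen.

Ltac split_ifs := repeat (match goal with |- context [if ?c then _ else _] =>
   lazymatch c with context [if _ then _ else _] => fail | _ => case: (boolP c) => ? end end; rewrite /=).
Ltac pairs_hyps := repeat match goal with H : context [(_, _) == (_, _)] |- _ => rewrite xpair_eqE in H end.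
Ltac fin := pairs_hyps; try (apply/eqP; rewrite ?xpair_eqE); lia.

Section Lab.
Variable n : nat.
Definition lab (j k a b : nat) : nat * nat :=
  if j <= a then (n, n) else if (j <= b) || ((b == j.-1) && (a < k)) then (a, n) else (a, b).

Lemma lab_step j k a b : k.+1 < j -> j <= n.-1 -> a < b -> b < n ->
  lab j k.+1 a b = if lab j k a b == (k, j.-1) then (k, n) else lab j k a b.
Proof. move=> *; rewrite /lab; split_ifs; fin. Qed.

Lemma lab_lev j a b : 0 < j -> j <= n.-1 -> a < b -> b < n ->
  lab j.-1 0 a b = if lab j j.-1 a b == (j.-1, n) then (n, n) else lab j j.-1 a b.
Proof. move=> *; rewrite /lab; split_ifs; fin. Qed.

Lemma lab_init a b a' b' : a < b -> b < n -> a' < b' -> b' < n ->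
  lab n.-1 0 a b = lab n.-1 0 a' b' -> a = a' /\ b = b'.
Proof. move=> ? ? ? ?; rewrite /lab; split_ifs; move/eqP; rewrite ?xpair_eqE; lia. Qed.

Definition MR j k (l l' : nat * nat) : bool :=
 [|| [&& l.1 == n, l'.1 < n & l'.2 == n],
     [&& l'.1 == n, l.1 < n & l.2 == n],
     [&& l.1 < n, l.2 == n, l'.1 < n, l'.2 == n, l.1 != l'.1 &
        [|| j <= n.-2, (l.1 < k) && (l'.1 < j.-1) | (l'.1 < k) && (l.1 < j.-1)]],
     [&& l.1 < k, l.2 == n, l'.2 == j.-1 & k <= l'.1]
   | [&& l'.1 < k, l'.2 == n, l.2 == j.-1 & k <= l.1] ].

Definition stage j k := ((k < j) && (j <= n.-1)) || ((j == 0) && (k == 0)).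

Definition E (a b c d : nat) :=
  ~~ ((a == c) && (b == d)) && [|| a == c, a == d, b == c | b == d].

Lemma lab_inv j k a b : a < b -> b < n -> j <= n.-1 ->
  [\/ j <= a /\ lab j k a b = (n, n),
      [/\ a < j, (j <= b) || ((b == j.-1) && (a < k)) & lab j k a b = (a, n)] |
      [/\ b < j, ~~ ((b == j.-1) && (a < k)) & lab j k a b = (a, b)]].
Proof.
move=> ab bn jn; rewrite /lab; case: (leqP j a) => ja; first by constructor 1; split.
case: ifP => c; first by constructor 2; split.
constructor 3; split => //; lia.
Qed.

Lemma vary j k a b a' b' c d : stage j k -> 4 < n -> a < b -> b < n -> a' < b' -> b' < n ->
  c < d -> d < n -> lab j k a b = lab j k a' b' -> lab j k c d != lab j k a b ->
  ~~ MR j k (lab j k a b) (lab j k c d) -> E a b c d = E a' b' c d.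
Proof.
move=> st n4 ab bn ab' bn' cd dn.
have jn : j <= n.-1 by move: st; rewrite /stage; lia.
have kj : k <= j.-1 by move: st; rewrite /stage; lia.
case: (lab_inv k ab bn jn) => [[ja ->]|[aj c1 ->]|[bj c1 ->]].
- case: (lab_inv k ab' bn' jn) => [[ja' ->] _|[? ? ->]|[? ? ->]]; last 2 first.
    by move/eqP; rewrite xpair_eqE; lia.
    by move/eqP; rewrite xpair_eqE; lia.
  case: (lab_inv k cd dn jn) => [[jc ->]|[cj c2 ->]|[dj c2 ->]] Hne HMR.
  + by rewrite eqxx in Hne.
  + by move: HMR; rewrite /MR /=; lia.
  + rewrite /E; clear -ja ja' dj ab ab' cd; lia.
- case: (lab_inv k ab' bn' jn) => [[ja' ->]|[aj' c1' ->]|[bj' c1' ->]] /eqP; rewrite xpair_eqE; try lia.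
  move=> /andP [/eqP ea _]; subst a'.
  case: (lab_inv k cd dn jn) => [[jc ->]|[cj c2 ->]|[dj c2 ->]] Hne HMR.
  + by move: HMR; rewrite /MR /=; lia.
  + have can : c != a by apply: contra Hne => /eqP ->.
    have HM : ~~ [|| j <= n.-2, (a < k) && (c < j.-1) | (c < k) && (a < j.-1)].
      apply: contra HMR => HX; rewrite /MR /= !eqxx /= (eq_sym a c) can HX !andbT.
      have an : a < n by clear -aj jn n4; lia.
      have cn : c < n by clear -cj jn n4; lia.
      by rewrite an cn !orbT.
    case: (ltnP a k) => ak.
      have ec : c = n.-2 by clear -HM ak cj jn; lia.
      have ed : d = n.-1 by clear -ec cd dn; lia.
      have Eb : forall b, (j <= b) || (b == j.-1) && (a < k) -> b < n -> E a b c d = true.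
        by move=> x; rewrite /E; clear -HM ak kj ec ed n4 jn; lia.
      by rewrite !Eb.
    have -> // : b = b' by clear -c1 c1' bn bn' ak HM jn; lia.
  + have H4 : ~~ [&& a < k, d == j.-1 & k <= c].
      apply: contra HMR => HX; rewrite /MR /=.
      by rewrite !eqxx /= HX !orbT.
    have Es : forall b, (j <= b) || (b == j.-1) && (a < k) -> E a b c d = (a == c) || (a == d).
      move=> x hx; have [n1 n2] : x != c /\ x != d by clear -hx H4 c2 cd dj; lia.
      by rewrite /E (negbTE n1) (negbTE n2) andbF !orbF.
    by rewrite !Es.
- case: (lab_inv k ab' bn' jn) => [[ja' ->]|[aj' c1' ->]|[bj' c1' ->]] /eqP; rewrite xpair_eqE; try lia.
  by move=> /andP [/eqP -> /eqP ->].
Qed.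

Definition cand j k (l : nat * nat) : seq (nat * nat) :=
 if l.1 == n then [seq (i, n) | i <- iota 0 j]
 else if l.2 == n then
   (if j <= n.-2 then [:: (n, n)] else [::]) ++
   [seq (i, n) | i <- [seq i <- iota 0 (if j <= n.-2 then j else j.-1) | i != l.1]] ++
   (if l.1 < k then [seq (i, j.-1) | i <- iota k (j.-1 - k)] else [::])
 else if (l.2 == j.-1) && (k <= l.1) then [seq (i, n) | i <- iota 0 k] else [::].

Lemma mem_map1 (z x y : nat) s : ((x, y) \in [seq (i, z) | i <- s]) = (y == z) && (x \in s).
Proof.
apply/mapP/andP => [[i si [-> ->]]|[/eqP -> xs]]; first by rewrite eqxx.
by exists x.
Qed.

Lemma size_filter_neq m x : size [seq i <- iota 0 m | i != x] = m - (x < m).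
Proof.
rewrite size_filter.
have := count_predC (pred1 x) (iota 0 m).
rewrite size_iota (count_uniq_mem _ (iota_uniq 0 m)) mem_iota add0n /=.
move=> H.
have E2 : count (fun i => i != x) (iota 0 m) = count (predC (pred1 x)) (iota 0 m) by [].
rewrite E2; move: H; case: (x < m) => H; rewrite -{2}H ?add1n ?add0n ?subn1 ?subn0 //.
Qed.

Lemma cand_mem j k a b c d : stage j k -> 4 < n -> a < b -> b < n -> c < d -> d < n ->
  lab j k c d != lab j k a b -> MR j k (lab j k a b) (lab j k c d) ->
  lab j k c d \in cand j k (lab j k a b).
Proof.
move=> st n4 ab bn cd dn.
have jn : j <= n.-1 by move: st; rewrite /stage; lia.
have kj : k <= j.-1 by move: st; rewrite /stage; lia.
case: (lab_inv k ab bn jn) => [[ja ->]|[aj c1 ->]|[bj c1 ->]];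
case: (lab_inv k cd dn jn) => [[jc ->]|[cj c2 ->]|[dj c2 ->]];
rewrite /MR /cand /= ?xpair_eqE => Hne HMR; split_ifs;
rewrite ?inE ?mem_cat ?mem_map1 ?mem_filter ?mem_iota ?inE ?xpair_eqE /=;
clear st; lia.
Qed.

Lemma cand_size j k a b : stage j k -> 4 < n -> a < b -> b < n ->
  size (cand j k (lab j k a b)) <= 2 * (n - 3).
Proof.
move=> st n4 ab bn.
have jn : j <= n.-1 by move: st; rewrite /stage; lia.
have kj : k <= j.-1 by move: st; rewrite /stage; lia.
case: (lab_inv k ab bn jn) => [[ja ->]|[aj c1 ->]|[bj c1 ->]];
rewrite /cand /= ?eqxx; split_ifs;
rewrite ?size_cat ?size_map ?size_filter_neq ?size_iota /=; clear st; lia.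
Qed.


Lemma MR_sym j k l l' : MR j k l l' = MR j k l' l.
Proof. case: l => x y; case: l' => x' y'; rewrite /MR /= (eq_sym x' x); btauto. Qed.

End Lab.

Section J.
Variable n : nat.
Local Notation T := (johnson2 n).
Local Notation e := (@johnson2_rel n).

Lemma vl2 (v : T) : exists x y : 'I_n, x != y /\ enum (val v) = [:: x; y].
Proof.
have hs : size (enum (val v)) = 2 by rewrite -cardE; apply/eqP; exact: (valP v).
have hu := enum_uniq (val v).
case: (enum (val v)) hs hu => [|x [|y [|z s]]] //= _; rewrite inE andbT => xy.
by exists x, y.
Qed.

Definition lo (v : T) : nat := if enum (val v) is x :: y :: _ then minn x y else 0.
Definition hi (v : T) : nat := if enum (val v) is x :: y :: _ then maxn x y else 0.

Lemma lohiP (v : T) : [/\ lo v < hi v, hi v < n &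
  forall i : 'I_n, (i \in val v) = ((i : nat) == lo v) || ((i : nat) == hi v)].
Proof.
have [x [y [xy E]]] := vl2 v.
have xy' : (x : nat) != y by apply: contra xy => /eqP H; apply/eqP; apply: val_inj.
have hx := ltn_ord x; have hy := ltn_ord y.
rewrite /lo /hi E; split; try lia.
move=> i; rewrite -mem_enum E !inE -!val_eqE /=.
have hi := ltn_ord i; lia.
Qed.

Lemma lo_hi (v : T) : lo v < hi v. Proof. by case: (lohiP v). Qed.
Lemma hi_n (v : T) : hi v < n. Proof. by case: (lohiP v). Qed.
Lemma mem_v (v : T) (i : 'I_n) : (i \in val v) = ((i : nat) == lo v) || ((i : nat) == hi v).
Proof. by case: (lohiP v). Qed.

Lemma v_eq (u w : T) : lo u = lo w -> hi u = hi w -> u = w.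
Proof. by move=> h1 h2; apply: val_inj; apply/setP => i; rewrite !mem_v h1 h2. Qed.

Lemma e_E (u w : T) : e u w = E (lo u) (hi u) (lo w) (hi w).
Proof.
rewrite /johnson2_rel /E.
case: (boolP ((lo u == lo w) && (hi u == hi w))) => [/andP [/eqP h1 /eqP h2] | neq] /=.
  by rewrite (v_eq h1 h2) setIid (eqP (valP w)).
have uw : val u != val w.
  apply: contra neq => /eqP H; have -> : u = w by apply: val_inj.
  by rewrite !eqxx.
have cu := eqP (valP u); have cw := eqP (valP w).
have le1 : #|val u :&: val w| <= 1.
  rewrite leqNgt; apply/negP => H.
  have eA : val u :&: val w = val u.
    by apply/eqP; rewrite eqEcard subsetIl cu.
  have eB : val u :&: val w = val w.
    by apply/eqP; rewrite eqEcard subsetIr cw.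
  by move: uw; rewrite -eA eB eqxx.
have -> : (#|val u :&: val w| == 1) = (0 < #|val u :&: val w|).
  by move: le1; case: #|_| => [|[|]].
rewrite card_gt0; apply/set0Pn/idP.
  case=> i; rewrite inE !mem_v; lia.
pose o1 := Ordinal (ltn_trans (lo_hi u) (hi_n u)).
pose o2 := Ordinal (hi_n u).
move=> H.
have [o [ou ow]] : exists o, o \in val u /\ o \in val w.
  case: (boolP ((lo u == lo w) || (lo u == hi w))) => h.
    by exists o1; rewrite !mem_v /= eqxx h.
  by exists o2; rewrite !mem_v /= eqxx orbT; move: H h; lia.
by exists o; rewrite inE ou ow.
Qed.

Lemma mkv a b : a < b -> b < n -> exists v : T, lo v = a /\ hi v = b.
Proof.
move=> ab bn.
pose o1 : 'I_n := Ordinal (ltn_trans ab bn).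
pose o2 : 'I_n := Ordinal bn.
have c2 : #|[set o1; o2]| == 2.
  rewrite cards2; have : o1 != o2 by rewrite -val_eqE /=; lia.
  by move=> ->.
pose v : T := exist _ [set o1; o2] c2.
exists v.
have m1 : o1 \in val v by rewrite /= !inE eqxx.
have m2 : o2 \in val v by rewrite /= !inE eqxx orbT.
have m3 : Ordinal (ltn_trans (lo_hi v) (hi_n v)) \in val v by rewrite mem_v /= eqxx.
have m4 : Ordinal (hi_n v) \in val v by rewrite mem_v /= eqxx orbT.
rewrite mem_v /= in m1; rewrite mem_v /= in m2.
rewrite /= !inE -!val_eqE /= in m3 m4.
have := lo_hi v; lia.
Qed.

Lemma e_sym (u w : T) : e u w = e w u.
Proof. by rewrite /johnson2_rel setIC. Qed.

Definition flab j k (v : T) := lab n j k (lo v) (hi v).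

Lemma stage_bound j k : stage n j k -> 4 < n ->
  max_red_degree e (part (flab j k)) <= 2 * (n - 3).
Proof.
move=> st n4; apply/bigmax_leqP => U /partP [x ->].
apply: leq_trans (red_bound (cand := cand n j k (flab j k x)) _)
                 (cand_size st n4 (lo_hi x) (hi_n x)).
move=> y ne rd.
have MRxy : MR n j k (flab j k x) (flab j k y).
  case: (boolP (MR n j k (flab j k x) (flab j k y))) => // nMR; exfalso.
  move: rd; apply/negP; apply: not_red.
  - move=> u u' w; rewrite !mem_cls => /eqP hu /eqP hu' /eqP hw.
    rewrite !e_E; apply: (vary st n4) (lo_hi u) (hi_n u) (lo_hi u') (hi_n u')
       (lo_hi w) (hi_n w) _ _ _.
    + by rewrite -/(flab j k u) -/(flab j k u') -hu -hu'.
    + by rewrite -/(flab j k u) -/(flab j k w) -hu -hw.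
    + by rewrite -/(flab j k u) -/(flab j k w) -hu -hw.
  - move=> u w w'; rewrite !mem_cls => /eqP hu /eqP hw /eqP hw'.
    rewrite (e_sym u w) (e_sym u w') !e_E.
    apply: (vary st n4) (lo_hi w) (hi_n w) (lo_hi w') (hi_n w') (lo_hi u) (hi_n u) _ _ _.
    + by rewrite -/(flab j k w) -/(flab j k w') -hw -hw'.
    + by rewrite -/(flab j k u) -/(flab j k w) -hu -hw eq_sym.
    + by rewrite -/(flab j k u) -/(flab j k w) -hu -hw MR_sym.
exact: cand_mem st n4 (lo_hi x) (hi_n x) (lo_hi y) (hi_n y) ne MRxy.
Qed.

Lemma flab_lab j k a b : a < b -> b < n -> exists v, flab j k v = lab n j k a b.
Proof. by move=> ab bn; have [v [h1 h2]] := mkv ab bn; exists v; rewrite /flab h1 h2. Qed.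

Lemma step1 j k : k.+1 < j -> j <= n.-1 ->
  contraction_step (part (flab j k)) (part (flab j k.+1)).
Proof.
move=> kj jn.
rewrite (@part_eqfun _ _ (flab j k.+1) (fun v => if flab j k v == (k, j.-1) then (k, n) else flab j k v)); last first.
  by move=> v; rewrite /flab lab_step // ?lo_hi ?hi_n.
have [x1 h1] : exists v, flab j k v = lab n j k k n.-1 by apply: flab_lab; lia.
have [x2 h2] : exists v, flab j k v = lab n j k k j.-1 by apply: flab_lab; lia.
apply: (merge_step (x1 := x1) (x2 := x2)); rewrite ?h1 ?h2 /lab; split_ifs; rewrite ?xpair_eqE; fin.
Qed.

Lemma step2 j : 0 < j -> j <= n.-2 ->
  contraction_step (part (flab j j.-1)) (part (flab j.-1 0)).
Proof.
move=> j0 jn.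
rewrite (@part_eqfun _ _ (flab j.-1 0) (fun v => if flab j j.-1 v == (j.-1, n) then (n, n) else flab j j.-1 v)); last first.
  by move=> v; rewrite /flab lab_lev // ?lo_hi ?hi_n //; lia.
have [x1 h1] : exists v, flab j j.-1 v = lab n j j.-1 j j.+1 by apply: flab_lab; lia.
have [x2 h2] : exists v, flab j j.-1 v = lab n j j.-1 j.-1 n.-1 by apply: flab_lab; lia.
apply: (merge_step (x1 := x1) (x2 := x2)); rewrite ?h1 ?h2 /lab; split_ifs; rewrite ?xpair_eqE; fin.
Qed.

Lemma eq3 : 2 < n -> part (flab n.-1 n.-2) = part (flab n.-2 0).
Proof.
move=> n2.
rewrite (@part_eqfun _ _ (flab n.-2 0) (fun v => if flab n.-1 n.-2 v == (n.-2, n) then (n, n) else flab n.-1 n.-2 v)).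
  symmetry; apply: relabel_same => v; rewrite /flab /lab.
  have := lo_hi v; have := hi_n v; split_ifs; rewrite ?xpair_eqE; fin.
move=> v.
by rewrite /flab lab_lev // ?lo_hi ?hi_n //; lia.
Qed.

Lemma init_part : 1 < n -> part (flab n.-1 0) = singleton_partition T.
Proof.
move=> n1; apply: part_inj => u w /eqP; rewrite /flab => /eqP H.
have [h1 h2] := lab_init (lo_hi u) (hi_n u) (lo_hi w) (hi_n w) H.
exact: v_eq.
Qed.

Definition Gm (P : {set {set T}}) := exists j k, stage n j k /\ P = part (flab j k).

Lemma Gm_next P : 4 < n -> Gm P -> 1 < #|P| -> exists2 Q, Gm Q & contraction_step P Q.
Proof.
move=> n4 [j [k [st ->]]] c1.
case: j st c1 => [|j] st c1.
  have k0 : k = 0 by move: st; rewrite /stage; lia.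
  subst k; have [x [y]] := part_gt1 c1; rewrite /flab /lab /=.
  by rewrite eqxx.
have kj : k < j.+1 by move: st; rewrite /stage; lia.
have jn : j.+1 <= n.-1 by move: st; rewrite /stage; lia.
case: (ltnP k.+1 j.+1) => hk.
  exists (part (flab j.+1 k.+1)); last exact: step1.
  by exists j.+1, k.+1; split => //; rewrite /stage; lia.
have ekj : k = j by lia.
subst k.
case: (leqP j.+1 n.-2) => hj.
  exists (part (flab j 0)); last exact: (step2 (j := j.+1)).
  by exists j, 0; split => //; rewrite /stage; lia.
have ej : j = n.-2 by lia.
subst j.
have -> : n.-2.+1 = n.-1 by lia.
rewrite eq3; last lia.
exists (part (flab n.-2 1)); last by apply: step1; lia.
by exists n.-2, 1; split => //; rewrite /stage; lia.
Qed.

Lemma inter_le1 (u v : T) : u != v -> #|val u :&: val v| <= 1.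
Proof.
move=> uv; have uw : val u != val v by apply: contra uv => /eqP H; apply/eqP; apply: val_inj.
have cu := eqP (valP u); have cw := eqP (valP v).
rewrite leqNgt; apply/negP => H.
have eA : val u :&: val v = val u by apply/eqP; rewrite eqEcard subsetIl cu.
have eB : val u :&: val v = val v by apply/eqP; rewrite eqEcard subsetIr cw.
by move: uw; rewrite -eA eB eqxx.
Qed.

Lemma card_I2 (X : {set 'I_n}) z x : x \notin X -> #|X :&: [set z; x]| = (z \in X).
Proof.
move=> xX; case: (boolP (z \in X)) => zX.
  have -> : X :&: [set z; x] = [set z]; last by rewrite cards1.
  apply/setP => i; rewrite !inE; case: (i =P z) => [->|_]; first by rewrite zX.
  by case: (i =P x) => [->|_]; [rewrite (negbTE xX) | rewrite andbF].
have -> : X :&: [set z; x] = set0; last by rewrite cards0.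
apply/setP => i; rewrite !inE; case: (i =P z) => [->|_]; first by rewrite (negbTE zX).
by case: (i =P x) => [->|_]; [rewrite (negbTE xX) | rewrite andbF].
Qed.

Lemma pair_red (u v : T) : u != v -> 4 < n ->
  2 * (n - 3) <= red_degree e (pair_partition u v) [set u; v] /\ 2 * (n - 3) <= #|T|.
Proof.
move=> uv n4.
set A := val u; set B := val v.
have cA : #|A| = 2 := eqP (valP u).
have cB : #|B| = 2 := eqP (valP v).
have i1 := inter_le1 uv.
set Dl := (A :\: B) :|: (B :\: A).
set Out := ~: (A :|: B).
set S := setX Dl Out.
pose g (p : 'I_n * 'I_n) : T := insubd u [set p.1; p.2].
have Sprop : forall p, p \in S -> [/\ p.1 \in A :|: B, p.2 \notin A :|: B & p.1 != p.2].
  case=> z x; rewrite !inE /= => /andP [hz hx].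
  have zAB : (z \in A) || (z \in B) by move: hz; case: (z \in A); case: (z \in B).
  split => //; apply: contraNneq hx => <-; exact: zAB.
have gval : forall p, p \in S -> val (g p) = [set p.1; p.2].
  move=> p /Sprop [_ _ ne]; rewrite /g val_insubd cards2 ne /=.
  by [].
set D := [set w | [&& w != u, w != v & e u w != e v w]].
have gD : forall p, p \in S -> g p \in D.
  move=> p pS; have [h1 h2 h3] := Sprop p pS; have gv := gval p pS.
  have xA : p.2 \notin A by move: h2; rewrite inE negb_or => /andP [].
  have xB : p.2 \notin B by move: h2; rewrite inE negb_or => /andP [].
  rewrite inE; apply/and3P; split.
  - apply: contra xA => /eqP E; by rewrite /A -E gv !inE eqxx orbT.
  - apply: contra xB => /eqP E; by rewrite /B -E gv !inE eqxx orbT.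
  - rewrite /johnson2_rel gv -/A -/B !card_I2 //.
    move: pS; rewrite !inE => /andP [hz _].
    by move: hz; case: (p.1 \in A); case: (p.1 \in B).
have ginj : {in S &, injective g}.
  move=> p q pS qS E.
  have := gval p pS; have := gval q qS; rewrite E => -> /setP H.
  have [hp1 hp2 _] := Sprop p pS; have [hq1 hq2 _] := Sprop q qS.
  have e1 : p.1 = q.1.
    have := H p.1; rewrite !inE eqxx /= => /orP [/eqP //|/eqP E2].
    by move: hq2; rewrite -E2 hp1.
  have e2 : p.2 = q.2.
    have := H p.2; rewrite !inE eqxx orbT /= => /orP [/eqP E2|/eqP //].
    by move: hp2; rewrite E2 -e1 hp1.
  by case: p q e1 e2 {E H pS qS hp1 hp2 hq1 hq2} => [? ?] [? ?] /= -> ->.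
have cD : #|S| <= #|D|.
  rewrite -(card_in_imset ginj); apply: subset_leq_card.
  by apply/subsetP => w /imsetP [p pS ->]; apply: gD.
have cS : #|S| = (2 - #|A :&: B| + (2 - #|A :&: B|)) * (n - (4 - #|A :&: B|)).
  rewrite cardsX cardsU.
  have -> : (A :\: B) :&: (B :\: A) = set0.
    by apply/setP => i; rewrite !inE; case: (i \in A); case: (i \in B).
  rewrite cards0 subn0 !cardsD cA cB (setIC B A).
  have hC := cardsC (A :|: B); rewrite card_ord cardsU cA cB -/Out in hC.
  congr (_ * _); lia.
have key : 2 * (n - 3) <= #|D|.
  apply: leq_trans cD; rewrite cS.
  by move: i1; case: #|A :&: B| => [|[|]] //= _; lia.
split; last by apply: (leq_trans key); apply: max_card.
apply: (leq_trans key).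
rewrite /red_degree -(card_imset _ (@set1_inj _)).
apply: subset_leq_card; apply/subsetP => W /imsetP [w]; rewrite inE => /and3P [wu wv ew] ->.
rewrite inE; apply/and3P; split.
- rewrite /pair_partition !inE; apply/orP; right; apply: imset_f.
  by rewrite !inE negb_or wu wv.
- by apply/negP => /eqP /setP /(_ u); rewrite !inE eqxx /= eq_sym (negbTE wu).
- rewrite /red_parts; apply/andP; split.
  + apply/negP => /forallP Hb; move: ew.
    have := Hb u; rewrite !inE eqxx /= => /forallP /(_ w); rewrite !inE eqxx /= => ->.
    by have := Hb v; rewrite !inE eqxx orbT /= => /forallP /(_ w); rewrite !inE eqxx /= => ->.
  + apply/negP => /forallP Hb; move: ew.
    have := Hb u; rewrite !inE eqxx /= => /forallP /(_ w); rewrite !inE eqxx /= => /negbTE ->.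
    by have := Hb v; rewrite !inE eqxx orbT /= => /forallP /(_ w); rewrite !inE eqxx /= => /negbTE ->.
Qed.

Definition tw (u w : T) := (u != w) && ~~ e u w.

Lemma tw_sym u w : tw u w = tw w u.
Proof. by rewrite /tw e_sym eq_sym. Qed.

Lemma neq_lohi (u w : T) : u != w -> ~~ ((lo u == lo w) && (hi u == hi w)).
Proof. by apply: contra => /andP [/eqP h1 /eqP h2]; apply/eqP; apply: v_eq. Qed.

Lemma tw_uniq u w y : n <= 4 -> tw u w -> tw u y -> w = y.
Proof.
move=> n4 /andP [uw ew] /andP [uy ey].
have := neq_lohi uw; have := neq_lohi uy.
move: ew ey; rewrite !e_E /E.
have := lo_hi u; have := hi_n u; have := lo_hi w; have := hi_n w; have := lo_hi y; have := hi_n y.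
move=> *; apply: v_eq; lia.
Qed.

Definition G4 (P : {set {set T}}) := exists f : T -> T, P = part f /\
  forall u w, tw u w -> f u = f w \/ (forall x, f x = f u -> x = u).

Lemma G4_bound P : G4 P -> max_red_degree e P <= 0.
Proof.
case=> f [-> Hf]; apply/bigmax_leqP => U /partP [x ->].
apply: leq_trans (red_bound (cand := [::]) _) _ => // y ne rd; exfalso.
have sing : forall u w, f u = f x -> f w = f y -> ~~ e u w -> forall z, f z = f u -> z = u.
  move=> u w hu hw euw.
  have uw : u != w by apply: contraNneq ne => E; rewrite -hw -E hu.
  have t : tw u w by rewrite /tw uw euw.
  case: (Hf u w t) => [E|//].
  by move: ne; rewrite -hw -E hu eqxx.
move: rd; apply/negP; apply: not_red.
- move=> u u' w; rewrite !mem_cls => /eqP hu /eqP hu' /eqP hw.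
  case: (boolP (e u w)) => Eu; case: (boolP (e u' w)) => Eu'; rewrite ?(negbTE Eu) ?(negbTE Eu') ?Eu ?Eu' //.
    have := sing u' w (esym hu') (esym hw) Eu' u; rewrite -hu -hu' => /(_ erefl) E.
    by move: Eu'; rewrite -E Eu.
  have := sing u w (esym hu) (esym hw) Eu u'; rewrite -hu -hu' => /(_ erefl) E.
  by move: Eu; rewrite -E Eu'.
- move=> u w w'; rewrite !mem_cls => /eqP hu /eqP hw /eqP hw'.
  have sing' : forall w0, f w0 = f y -> ~~ e u w0 -> forall z, f z = f w0 -> z = w0.
    move=> w0 h0 e0; have wu : w0 != u by apply: contraNneq ne => E; rewrite -h0 E hu.
    have t : tw w0 u by rewrite /tw wu e_sym e0.
    case: (Hf w0 u t) => [E|//].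
    by move: ne; rewrite -h0 E hu eqxx.
  case: (boolP (e u w)) => Eu; case: (boolP (e u w')) => Eu'; rewrite ?(negbTE Eu) ?(negbTE Eu') ?Eu ?Eu' //.
    have := sing' w' (esym hw') Eu' w; rewrite -hw -hw' => /(_ erefl) E.
    by move: Eu'; rewrite -E Eu.
  have := sing' w (esym hw) Eu w'; rewrite -hw -hw' => /(_ erefl) E.
  by move: Eu; rewrite -E Eu'.
Qed.

Lemma G4_next P : n <= 4 -> G4 P -> 1 < #|P| -> exists2 Q, G4 Q & contraction_step P Q.
Proof.
move=> n4 [f [-> Hf]] c1.
case: (boolP [exists u, exists w, tw u w && (f u != f w)]).
  case/existsP => u /existsP [w /andP [tuw fuw]].
  set g := fun x => if f x == f w then f u else f x.
  exists (part g); last exact: merge_step.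
  have Su : forall z, f z = f u -> z = u.
    by case: (Hf u w tuw) => // E; move: fuw; rewrite E eqxx.
  have Sw : forall z, f z = f w -> z = w.
    have t : tw w u by rewrite tw_sym.
    by case: (Hf w u t) => // E; move: fuw; rewrite E eqxx.
  exists g; split => // x y txy.
  case: (Hf x y txy) => [E|Sx]; first by left; rewrite /g E.
  case: (x =P u) => [ex|nxu].
    subst x; left; rewrite (tw_uniq n4 txy tuw) /g eqxx.
    by rewrite (negbTE fuw).
  case: (x =P w) => [ex|nxw].
    subst x; left; rewrite tw_sym in tuw; rewrite (tw_uniq n4 txy tuw) /g eqxx.
    by rewrite (negbTE fuw).
  have fxu : f x != f u by apply/eqP => /Su.
  have fxw : f x != f w by apply/eqP => /Sw.
  right => z; rewrite /g (negbTE fxw).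
  case: (f z =P f w) => [_ E|_ E]; last exact: Sx.
  by move: fxu; rewrite E eqxx.
rewrite negb_exists => /forallP H0.
have Hf' : forall u w, tw u w -> f u = f w.
  move=> u w t; move: (H0 u); rewrite negb_exists => /forallP /(_ w).
  by rewrite t /= negbK => /eqP.
have [x [y fxy]] := part_gt1 c1.
exists (part (fun z => if f z == f y then f x else f z)); last exact: merge_step.
exists (fun z => if f z == f y then f x else f z); split => // u w t.
by left; rewrite (Hf' u w t).
Qed.

Lemma G4_init : G4 (singleton_partition T).
Proof.
exists id; split; first by rewrite part_inj.
by move=> u w _; right.
Qed.

End J.

Theorem mainTheorem6 (n : nat) (hn : 2 <= n) :
  is_twin_width (@johnson2_rel n) (lb1 (@johnson2_rel n)) /\
  lb1 (@johnson2_rel n) = (if 5 <= n then 2 * (n - 3) else 0).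
Proof.
have [v01 [l01 h01]] : exists v : johnson2 n, lo v = 0 /\ hi v = 1 by apply: mkv; lia.
have T0 : 0 < #|johnson2 n| by apply/card_gt0P; exists v01.
have main : exists K, [/\ lb1 (@johnson2_rel n) = K,
    K = (if 5 <= n then 2 * (n - 3) else 0) &
    exists2 s, contraction_sequence s & cs_width (@johnson2_rel n) s <= K].
  case: (leqP 5 n) => h5.
    have n4 : 4 < n by [].
    exists (2 * (n - 3)); split => //.
      apply/eqP; rewrite eqn_leq; apply/andP; split.
        have st := step1 (n := n) (j := n.-1) (k := 0) (ltac:(lia)) (ltac:(lia)).
        rewrite init_part in st; last lia.
        have [u [v [uv eQ]]] := pair_of_step st.
        apply: leq_trans (lb1_le _ uv) _; rewrite -eQ.
        by apply: stage_bound => //; rewrite /stage; lia.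
      have [v02 [l02 h02]] : exists v : johnson2 n, lo v = 0 /\ hi v = 2 by apply: mkv; lia.
      have ne : v01 != v02 by apply/eqP => E; move: h01; rewrite E h02.
      apply: lb1_ge.
      - by apply/card_gt1P; exists v01, v02.
      - by case: (pair_red ne n4).
      - move=> u v uv; case: (pair_red uv n4) => H _; apply: (leq_trans H).
        by rewrite /max_red_degree; apply: leq_bigmax_cond; rewrite /pair_partition !inE eqxx.
    apply: (build (G := @Gm n)) => //.
    - by move=> P [j [k [_ ->]]]; exact: part_partition.
    - by move=> P [j [k [st ->]]]; exact: stage_bound.
    - by move=> P GP; apply: Gm_next.
    - by exists n.-1, 0; split; [rewrite /stage; lia | rewrite init_part //; lia].
  have n4 : n <= 4 by lia.
  exists 0; split; last first.
  - apply: (build (G := @G4 n)) => //.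
    + by move=> P [f [-> _]]; exact: part_partition.
    + by move=> P GP; exact: G4_bound.
    + by move=> P GP; apply: G4_next.
    + exact: G4_init.
  - by [].
  apply/eqP; rewrite -leqn0.
  case: (leqP #|johnson2 n| 1) => hT; first by rewrite /lb1 hT.
  have [Q GQ st] := G4_next n4 (@G4_init n) (ltac:(by rewrite card_singleton)).
  have [u [v [uv eQ]]] := pair_of_step st.
  apply: leq_trans (lb1_le _ uv) _; rewrite -eQ.
  exact: G4_bound.
have [K [HK HKv [s cs ws]]] := main.
split; last by rewrite HK.
split; last by move=> s' cs'; exact: seq_lower.
exists s => //; apply/eqP; rewrite eqn_leq seq_lower // andbT.
by rewrite HK.
Qed.
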